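(* Assume the standing assumptions and let $f$ satisfy (F). Let $\tilde s$ be the solution of the linearized equation below and $u$ the solution of the discrete heat problem $\partial_tu=\Delta_hu$ on $(0,T]\times\Omega_h^+$, $u(0,\cdot)=0$, $u(t,0)=\psi(t)$. Then $\tilde v:=\tilde s-u$ satisfies $\|\tilde v\|_{L^\infty([0,T]\times\Omega_h^+)}\le2\eta$.
   Context: Discrete setting: $h>0$, $\Omega_h^+=\{h,2h,\dots\}$, $\Omega_{h,0}^+=\Omega_h^+\cup\{0\}$, $\|f\|_{L^p(\Omega_h^+)}=(h\sum_{z\in\Omega_h^+}|f(z)|^p)^{1/p}$, $D^\pm_h$ the forward/backward differences $D^+_hf(x)=\frac{f(x+h)-f(x)}{h}$, $D^-_hf(x)=\frac{f(x)-f(x-h)}{h}$, $\Delta_h=D^+_hD^-_h$. Standing assumptions: $A=1$, $B\in\{-1,1\}$, $\varphi(c)=A+Bc$, $\lambda>0$, $T>0$, $\eta>0$; $\psi\in C^\beta([0,T])$ for some $\beta\in(1/4,1/2)$, $0\le\psi\le\eta$, $\psi(0)=0$; $0\le s_0\le\eta$, $s_0(0)=0$, $s_0,D^+_hs_0\in L^2(\Omega_h^+)$; $0<c_m\le c_0\le C_0$, $C_0-c_0,D^+_hc_0\in L^2(\Omega_h^+)$; $0<\varphi_{\min}\le\varphi(c)\le\varphi_{\max}$ for $c\in[0,C_0]$; if $B=1$ then $\eta<1$. Conditions (F) on Borel $f:[0,T]\times\Omega_{h,0}^+\to\mathbb{R}$: $f\in C([0,T],L^2(\Omega_h^+))$,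 $\sup_t\|f(t)\|^2_{L^2}+\int_0^T\|D^+_hf\|^2_{L^2}dt\le K$ for some $K>0$, $f(t,0)=\psi(t)$, $0\le f\le\eta$. Linearized equation: with $g=Ac_0[\varphi(c_0)e^{\lambda A\int_0^tf\,d\tau}-Bc_0]^{-1}$, $b_g=\frac{B}{2(A+Bg)}$, $\gamma_g=\lambda g$, $\tilde s$ is the bounded solution of $\partial_t\tilde s=\Delta_h\tilde s+b_g[D^+_hgD^+_h\tilde s+D^-_hgD^-_h\tilde s]+\gamma_g\tilde s(Bf-1)$ on $(0,T]\times\Omega_h^+$, $\tilde s(0,\cdot)=s_0$, $\tilde s(t,0)=\psi(t)$. *)

(* Defs.v *)
From Stdlib Require Import Reals.
From Coquelicot Require Import Coquelicot.
Open Scope R_scope.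

(* Lattice functions: a grid function v : nat -> R represents x = n*h |-> v n,
   n = 0 is the boundary point 0, n >= 1 are the points of Omega_h^+. *)

Definition Dp (h : R) (v : nat -> R) (n : nat) : R := (v (S n) - v n) / h.
Definition Dm (h : R) (v : nat -> R) (n : nat) : R := (v n - v (Nat.pred n)) / h.
Definition lap (h : R) (v : nat -> R) (n : nat) : R := Dp h (Dm h v) n.

Definition inL2 (v : nat -> R) : Prop := ex_series (fun k => (v (S k)) ^ 2).
Definition L2sq (h : R) (v : nat -> R) : R := h * Series (fun k => (v (S k)) ^ 2).

Definition in0T (T t : R) : Prop := 0 <= t <= T.
Definition cont_on_0T (T : R) (w : R -> R) : Prop :=
  forall t0, in0T T t0 ->
    filterlim w (within (in0T T) (locally t0)) (locally (w t0)).

(* phi(c) = A + B c with A = 1 *)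
Definition phi (B c : R) : R := 1 + B * c.

Definition holder_0T (T beta : R) (psi : R -> R) : Prop :=
  exists L, forall t s, in0T T t -> in0T T s -> t <> s ->
    Rabs (psi t - psi s) <= L * Rpower (Rabs (t - s)) beta.

Definition condF (h T eta K : R) (psi : R -> R) (f : R -> nat -> R) : Prop :=
  (forall t, in0T T t -> inL2 (f t)) /\
  (forall t0, in0T T t0 ->
     filterlim (fun t => L2sq h (fun n => f t n - f t0 n))
               (within (in0T T) (locally t0)) (locally 0)) /\
  (forall t, in0T T t -> inL2 (Dp h (f t))) /\
  ex_RInt (fun t => L2sq h (Dp h (f t))) 0 T /\
  (forall t, in0T T t ->
     L2sq h (f t) + RInt (fun t => L2sq h (Dp h (f t))) 0 T <= K) /\
  (forall t, in0T T t -> f t 0%nat = psi t) /\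
  (forall t n, in0T T t -> 0 <= f t n <= eta).

Definition gcoef (lam B : R) (c0 : nat -> R) (f : R -> nat -> R) (t : R) (n : nat) : R :=
  c0 n / (phi B (c0 n) * exp (lam * RInt (fun tau => f tau n) 0 t) - B * c0 n).

Definition bcoef (B : R) (g : nat -> R) (n : nat) : R := B / (2 * (1 + B * g n)).
Definition gammacoef (lam : R) (g : nat -> R) (n : nat) : R := lam * g n.

Definition lin_rhs (h lam B : R) (c0 : nat -> R) (f : R -> nat -> R)
    (s : R -> nat -> R) (t : R) (n : nat) : R :=
  let g := gcoef lam B c0 f t in
  lap h (s t) n
  + bcoef B g n * (Dp h g n * Dp h (s t) n + Dm h g n * Dm h (s t) n)
  + gammacoef lam g n * s t n * (B * f t n - 1).

Definition is_lin_solution (h lam B T : R) (psi : R -> R) (s0 c0 : nat -> R)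
    (f : R -> nat -> R) (s : R -> nat -> R) : Prop :=
  (exists M, forall t n, in0T T t -> Rabs (s t n) <= M) /\
  (forall n, cont_on_0T T (fun t => s t n)) /\
  (forall t n, 0 < t < T -> (1 <= n)%nat ->
     is_derive (fun t' => s t' n) t (lin_rhs h lam B c0 f s t n)) /\
  (forall n, (1 <= n)%nat -> s 0 n = s0 n) /\
  (forall t, in0T T t -> s t 0%nat = psi t).

Definition is_heat_solution (h T : R) (psi : R -> R) (u : R -> nat -> R) : Prop :=
  (exists M, forall t n, in0T T t -> Rabs (u t n) <= M) /\
  (forall n, cont_on_0T T (fun t => u t n)) /\
  (forall t n, 0 < t < T -> (1 <= n)%nat ->
     is_derive (fun t' => u t' n) t (lap h (u t) n)) /\
  (forall n, (1 <= n)%nat -> u 0 n = 0) /\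
  (forall t, in0T T t -> u t 0%nat = psi t).

(* Main.v *)
Require Import Defs.
From Coquelicot Require Import Coquelicot.
From Stdlib Require Import Reals Lra Lia ZArith.
From Stdlib Require Classical_Prop.
Open Scope R_scope.


Lemma ballR (x y : R) (e : R) : ball x e y <-> Rabs (y - x) < e.
Proof. unfold ball; simpl; unfold AbsRing_ball, abs, minus, plus, opp; simpl. tauto. Qed.

Lemma cont_ed T F t0 : cont_on_0T T F -> in0T T t0 -> forall eps, 0 < eps ->
  exists d, 0 < d /\ forall t, in0T T t -> Rabs (t - t0) < d -> Rabs (F t - F t0) < eps.
Proof.
intros H Ht eps He. specialize (H t0 Ht).
apply filterlim_locally with (eps := mkposreal eps He) in H.
destruct H as [d Hd]. exists d. split. apply cond_pos.
intros t Ht' Hlt. specialize (Hd t). rewrite ballR in Hd. specialize (Hd Hlt Ht').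
rewrite ballR in Hd. exact Hd.
Qed.

Lemma cont_ed_inv T F : (forall t0, in0T T t0 -> forall eps, 0 < eps ->
  exists d, 0 < d /\ forall t, in0T T t -> Rabs (t - t0) < d -> Rabs (F t - F t0) < eps)
  -> cont_on_0T T F.
Proof.
intros H t0 Ht. apply filterlim_locally. intros eps.
destruct (H t0 Ht eps (cond_pos eps)) as [d [Hd1 Hd2]].
exists (mkposreal d Hd1). intros y Hy Dy. rewrite ballR in Hy. rewrite ballR. simpl in Hy.
apply Hd2; auto.
Qed.

Lemma cont_glob T F : (forall x, continuity_pt F x) -> cont_on_0T T F.
Proof.
intros H. apply cont_ed_inv. intros t0 _ eps He.
destruct (H t0 eps He) as [d [Hd1 Hd2]]. exists d; split; auto.
intros t _ Ht. destruct (Req_dec t t0) as [->|Hne].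
rewrite Rminus_eq_0, Rabs_R0; auto.
apply (Hd2 t). split. split. exact I. auto. exact Ht.
Qed.

Lemma cont_aff T F k b : cont_on_0T T F -> cont_on_0T T (fun t => k * F t + b).
Proof.
intros H. apply cont_ed_inv. intros t0 Ht eps He.
destruct (cont_ed T F t0 H Ht (eps / (Rabs k + 1))) as [d [Hd1 Hd2]].
apply Rdiv_lt_0_compat; auto. pose proof (Rabs_pos k); lra.
exists d; split; auto. intros t Ht' Hlt. specialize (Hd2 t Ht' Hlt).
replace (k * F t + b - (k * F t0 + b)) with (k * (F t - F t0)) by ring.
rewrite Rabs_mult. pose proof (Rabs_pos k). pose proof (Rabs_pos (F t - F t0)).
assert (Rabs (F t - F t0) * (Rabs k + 1) < eps).
{ apply (Rmult_lt_compat_r (Rabs k + 1)) in Hd2; [|lra].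
  unfold Rdiv in Hd2. rewrite Rmult_assoc, Rinv_l in Hd2; lra. }
nra.
Qed.

Lemma cont_minus T F G : cont_on_0T T F -> cont_on_0T T G -> cont_on_0T T (fun t => F t - G t).
Proof.
intros HF HG. apply cont_ed_inv. intros t0 Ht eps He.
destruct (cont_ed T F t0 HF Ht (eps/2)) as [d1 [Hd1 Hd1']]. lra.
destruct (cont_ed T G t0 HG Ht (eps/2)) as [d2 [Hd2 Hd2']]. lra.
exists (Rmin d1 d2). split. apply Rmin_pos; auto.
intros t Ht' Hlt. specialize (Hd1' t Ht'). specialize (Hd2' t Ht').
assert (Rabs (t - t0) < d1) by (eapply Rlt_le_trans; [exact Hlt| apply Rmin_l]).
assert (Rabs (t - t0) < d2) by (eapply Rlt_le_trans; [exact Hlt| apply Rmin_r]).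
specialize (Hd1' H). specialize (Hd2' H0).
replace (F t - G t - (F t0 - G t0)) with ((F t - F t0) - (G t - G t0)) by ring.
eapply Rle_lt_trans. apply Rabs_triang. rewrite Rabs_Ropp. lra.
Qed.

Definition clamp (t1 x : R) := Rmax 0 (Rmin t1 x).

Lemma clamp_in t1 x : 0 <= t1 -> 0 <= clamp t1 x <= t1.
Proof. intros. unfold clamp, Rmax, Rmin. repeat destruct Rle_dec; lra. Qed.
Lemma clamp_id t1 x : 0 <= x <= t1 -> clamp t1 x = x.
Proof. intros. unfold clamp, Rmax, Rmin. repeat destruct Rle_dec; lra. Qed.
Lemma clamp_lip t1 x y : 0 <= t1 -> Rabs (clamp t1 x - clamp t1 y) <= Rabs (x - y).
Proof. intros. unfold clamp, Rmax, Rmin. repeat destruct Rle_dec;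
  unfold Rabs; repeat destruct Rcase_abs; lra. Qed.

Lemma clamp_cont T t1 F c : 0 <= t1 <= T -> cont_on_0T T F ->
  continuity_pt (fun x => F (clamp t1 x)) c.
Proof.
intros Ht1 HF eps He.
assert (Hc : in0T T (clamp t1 c)). { pose proof (clamp_in t1 c). unfold in0T. lra. }
destruct (cont_ed T F _ HF Hc eps He) as [d [Hd1 Hd2]].
exists d; split; auto. intros x [_ Hx]. simpl in Hx. unfold R_dist in *.
apply Hd2. pose proof (clamp_in t1 x). unfold in0T; lra.
eapply Rle_lt_trans. apply clamp_lip; lra. exact Hx.
Qed.

Lemma deriv_max g t l : 0 < t -> is_derive g t l ->
  (forall y, 0 <= y <= t -> g y <= g t) -> 0 <= l.
Proof.
intros Ht Hd Hm. apply is_derive_Reals in Hd.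
destruct (Rle_or_lt 0 l) as [?|Hl]; auto. exfalso.
destruct (Hd (- l / 2)) as [d Hdd]. lra.
set (hh := - Rmin (d/2) t).
assert (Hpos : 0 < Rmin (d/2) t). { apply Rmin_pos; [pose proof (cond_pos d)|]; lra. }
assert (Hle1 : Rmin (d/2) t <= d/2) by apply Rmin_l.
assert (Hle2 : Rmin (d/2) t <= t) by apply Rmin_r.
assert (hh <> 0) by (unfold hh; lra).
assert (Rabs hh < d) by (unfold hh; rewrite Rabs_Ropp, Rabs_pos_eq; pose proof (cond_pos d); lra).
specialize (Hdd hh H H0).
assert (Hg : g (t + hh) <= g t) by (apply Hm; unfold hh; lra).
set (q := (g (t + hh) - g t) / hh) in *.
assert (q * hh = g (t + hh) - g t) by (unfold q; field; auto).
assert (0 <= q) by (unfold hh in *; nra).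
apply Rabs_def2 in Hdd. lra.
Qed.

Lemma endpoint T F : 0 < T -> cont_on_0T T F -> (forall t, 0 <= t < T -> F t <= 0) -> F T <= 0.
Proof.
intros HT HF H. destruct (Rle_or_lt (F T) 0) as [?|Hp]; auto. exfalso.
destruct (cont_ed T F T HF ltac:(unfold in0T; lra) (F T / 2)) as [d [Hd1 Hd2]]. lra.
set (x := Rmax 0 (T - d/2)).
assert (0 <= x) by apply Rmax_l. assert (T - d/2 <= x) by apply Rmax_r.
assert (x < T). { unfold x, Rmax; destruct Rle_dec; lra. }
specialize (Hd2 x ltac:(unfold in0T; lra) ltac:(rewrite Rabs_left; lra)).
specialize (H x ltac:(lra)). apply Rabs_def2 in Hd2. lra.
Qed.

Lemma evt t1 G : 0 <= t1 -> (forall c, continuity_pt G c) ->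
  exists tm, 0 <= tm <= t1 /\ forall c, 0 <= c <= t1 -> G c <= G tm.
Proof.
intros H HG. destruct (continuity_ab_maj G 0 t1 H (fun c _ => HG c)) as [tm [H1 H2]].
exists tm; split; auto.
Qed.

Lemma finmax (z : R -> nat -> R) t1 : 0 <= t1 ->
  (forall n c, continuity_pt (fun x => z (clamp t1 x) n) c) -> forall N,
  exists k tm, (k <= N)%nat /\ 0 <= tm <= t1 /\
    forall m s, (m <= N)%nat -> 0 <= s <= t1 -> z s m <= z tm k.
Proof.
intros Ht1 Hc N.
assert (E : forall n, exists tm, 0 <= tm <= t1 /\ forall s, 0 <= s <= t1 -> z s n <= z tm n).
{ intros n. destruct (evt t1 _ Ht1 (Hc n)) as [tm [H1 H2]]. exists tm. split; auto.
  intros s Hs. specialize (H2 s Hs). rewrite !clamp_id in H2; auto. }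
induction N.
- destruct (E 0%nat) as [tm [H1 H2]]. exists 0%nat, tm. split; auto. split; auto.
  intros m s Hm Hs. replace m with 0%nat by lia. auto.
- destruct IHN as [k [tm [Hk [Htm Hmax]]]].
  destruct (E (S N)) as [tm' [H1 H2]].
  destruct (Rle_or_lt (z tm' (S N)) (z tm k)).
  + exists k, tm. split; [lia|]. split; auto. intros m s Hm Hs.
    destruct (Nat.eq_dec m (S N)) as [->|Hne]. eapply Rle_trans; [apply H2; auto|auto].
    apply Hmax; auto. lia.
  + exists (S N), tm'. split; auto. split; auto. intros m s Hm Hs.
    destruct (Nat.eq_dec m (S N)) as [->|Hne]. apply H2; auto.
    eapply Rle_trans. apply Hmax; auto. lia. lra.
Qed.

Lemma nat_big x : exists N : nat, x < INR N.
Proof.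
destruct (archimed x) as [H1 _].
exists (Z.to_nat (up x)).
destruct (Z_lt_le_dec (up x) 0).
- pose proof (pos_INR (Z.to_nat (up x))). apply IZR_lt in l. lra.
- rewrite INR_IZR_INZ, Z2Nat.id; auto.
Qed.

Lemma barrier_cont T e K a : cont_on_0T T (fun t => e * exp (K * t) * a).
Proof.
apply cont_glob. intros x. apply derivable_continuous_pt.
exists (e * (K * exp (K*x)) * a). apply is_derive_Reals. auto_derive; auto; ring.
Qed.

Lemma maxp T A (ap am c d w : R -> nat -> R) :
 0 < T -> 0 <= A ->
 (forall t n, 0 < t < T -> (1 <= n)%nat ->
    0 <= ap t n <= A /\ 0 <= am t n <= A /\ c t n <= 0) ->
 (exists M, forall t n, in0T T t -> w t n <= M) ->
 (forall n, cont_on_0T T (fun t => w t n)) ->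
 (forall t n, 0 < t < T -> (1 <= n)%nat -> is_derive (fun t' => w t' n) t (d t n)) ->
 (forall t n, 0 < t < T -> (1 <= n)%nat ->
    d t n <= ap t n * (w t (S n) - w t n) + am t n * (w t (Nat.pred n) - w t n)
             + c t n * w t n) ->
 (forall n, (1 <= n)%nat -> w 0 n <= 0) ->
 (forall t, in0T T t -> w t 0%nat <= 0) ->
 forall t n, in0T T t -> w t n <= 0.
Proof.
intros HT HA Hco [M HM] Hcont Hder Hineq Hinit Hbd.
assert (Hlt : forall t1 n1, 0 <= t1 < T -> w t1 n1 <= 0).
{ intros t1 n1 Ht1. destruct (Rle_or_lt (w t1 n1) 0) as [|Hw]; auto. exfalso.
  set (K := A + 1).
  assert (HE1 : 0 < exp (K * t1) * (1 + INR n1)).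
  { pose proof (exp_pos (K*t1)); pose proof (pos_INR n1); nra. }
  set (eps := w t1 n1 / (2 * (exp (K * t1) * (1 + INR n1)))).
  assert (Heps : 0 < eps). { unfold eps. apply Rdiv_lt_0_compat; lra. }
  set (z := fun t n => w t n - eps * exp (K * t) * (1 + INR n)).
  assert (Hz1 : z t1 n1 = w t1 n1 / 2). { unfold z, eps. field. pose proof (exp_pos (K*t1)); pose proof (pos_INR n1).
    repeat split; try lra; nra. }
  assert (Hexp : forall t, 0 <= t -> 1 <= exp (K * t)).
  { intros t Ht. rewrite <- exp_0. destruct Ht as [Ht|<-].
    left. apply exp_increasing. apply Rmult_lt_0_compat; unfold K; lra.
    rewrite Rmult_0_r; lra. }
  assert (Hzneg : forall t n, 0 <= t -> w t n <= 0 -> z t n < 0).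
  { intros t n Ht Hw'. unfold z. pose proof (Hexp t Ht). pose proof (pos_INR n).
    assert (0 < eps * exp (K*t) * (1+INR n)) by (apply Rmult_lt_0_compat; [apply Rmult_lt_0_compat|]; lra).
    lra. }
  destruct (nat_big (M / eps)) as [N0 HN0].
  assert (Hbig : forall t n, in0T T t -> (N0 <= n)%nat -> z t n < 0).
  { intros t n Ht Hn. unfold z. pose proof (HM t n Ht). pose proof (Hexp t (proj1 Ht)).
    apply le_INR in Hn. assert (M < eps * INR N0).
    { apply (Rmult_lt_compat_l eps) in HN0; auto. unfold Rdiv in HN0.
      rewrite <- Rmult_assoc, (Rmult_comm eps M), Rmult_assoc, Rinv_r in HN0; lra. }
    assert (eps * INR N0 <= eps * (1 + INR n)) by nra.
    assert (eps * (1 + INR n) <= eps * exp (K * t) * (1 + INR n)).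
    { pose proof (pos_INR n).
      assert (0 <= (exp (K*t) - 1) * (eps * (1 + INR n))) by (apply Rmult_le_pos; [lra| apply Rmult_le_pos; lra]).
      nra. }
    lra. }
  assert (Hc : forall n c0, continuity_pt (fun x => z (clamp t1 x) n) c0).
  { intros n c0. apply (clamp_cont T t1 (fun t => z t n)). lra.
    unfold z. apply cont_minus; auto. apply barrier_cont. }
  destruct (finmax z t1 (proj1 Ht1) Hc (Nat.max N0 n1)) as [k [tm [Hk [Htm Hmax]]]].
  assert (Hzk : z t1 n1 <= z tm k) by (apply Hmax; [lia|lra]).
  assert (Hall : forall m, z tm m <= z tm k).
  { intros m. destruct (le_lt_dec m (Nat.max N0 n1)). apply Hmax; auto.
    pose proof (Hbig tm m ltac:(unfold in0T; lra) ltac:(lia)). lra. }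
  assert (Hk1 : (1 <= k)%nat).
  { destruct k; [|lia]. exfalso. pose proof (Hzneg tm 0%nat (proj1 Htm) (Hbd tm ltac:(unfold in0T; lra))). lra. }
  assert (Htm0 : 0 < tm).
  { destruct (proj1 Htm) as [|<-]; auto. exfalso.
    pose proof (Hzneg 0 k ltac:(lra) (Hinit k Hk1)). lra. }
  assert (HtmT : 0 < tm < T) by lra.
  set (E := exp (K * tm)).
  assert (HE : 0 < E) by apply exp_pos.
  assert (Hdz : is_derive (fun t => z t k) tm (d tm k - eps * (K * E) * (1 + INR k))).
  { unfold z. apply is_derive_Reals. apply derivable_pt_lim_minus.
    apply is_derive_Reals. auto.
    apply is_derive_Reals. auto_derive; auto. unfold E; ring. }
  assert (H0 := deriv_max _ _ _ Htm0 Hdz (fun y Hy => Hmax k y ltac:(lia) ltac:(lra))).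
  specialize (Hineq tm k HtmT Hk1). destruct (Hco tm k HtmT Hk1) as [Hap [Ham Hcc]].
  pose proof (Hall (S k)) as Hs. pose proof (Hall (Nat.pred k)) as Hp.
  unfold z in Hs, Hp, Hzk, Hz1. fold E in Hs, Hp, Hzk.
  rewrite S_INR in Hs.
  assert (Hpk : INR (Nat.pred k) = INR k - 1).
  { destruct k; [lia|]. simpl Nat.pred. rewrite S_INR; ring. }
  rewrite Hpk in Hp.
  assert (Hw1 : w tm (S k) - w tm k <= eps * E) by lra.
  assert (Hw2 : w tm (Nat.pred k) - w tm k <= - (eps * E)) by lra.
  assert (Hwk : 0 < w tm k).
  { pose proof (pos_INR k).
    assert (0 < eps * E * (1 + INR k)) by (apply Rmult_lt_0_compat; [apply Rmult_lt_0_compat|]; lra).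
    lra. }
  assert (HeE : 0 < eps * E) by (apply Rmult_lt_0_compat; lra).
  assert (ap tm k * (w tm (S k) - w tm k) <= ap tm k * (eps * E)) by (apply Rmult_le_compat_l; lra).
  assert (am tm k * (w tm (Nat.pred k) - w tm k) <= 0) by nra.
  assert (c tm k * w tm k <= 0) by nra.
  assert (ap tm k * (eps * E) <= A * (eps * E)) by nra.
  pose proof (pos_INR k).
  assert (eps * (K * E) * (1 + INR k) >= eps * E * (A + 1)).
  { replace (eps * (K * E) * (1 + INR k)) with (eps * E * (A + 1) + eps * E * (A + 1) * INR k)
      by (unfold K; ring).
    assert (0 <= eps * E * (A + 1) * INR k) by (apply Rmult_le_pos; [apply Rmult_le_pos|]; lra).
    lra. }
  lra. }
intros t n Ht. destruct (proj2 Ht) as [Hl|He].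
- apply Hlt. unfold in0T in Ht; lra.
- subst t. apply (endpoint T (fun t => w t n)); auto.
Qed.

Lemma RInt_nex (f : R -> R) a b : ~ ex_RInt f a b -> RInt f a b = 0.
Proof.
intros H. unfold RInt, iota.
change (R_complete_lim (fun A : R -> Prop => forall x : R, is_RInt f a b x -> A x) = 0).
unfold R_complete_lim.
assert (E: Lub_Rbar (fun x : R => forall y, is_RInt f a b y -> ball (x + 1) {| pos := 1; cond_pos := Rlt_0_1 |} y) = p_infty).
apply is_lub_Rbar_unique. split.
- intros x _. simpl; auto.
- intros [x| |] Hx; simpl; auto.
  + assert (Hx' := Hx (x+1)). simpl in Hx'. exfalso.
    assert (x+1 <= x). apply Hx'. intros y Hy. exfalso; apply H; exists y; auto. lra.
  + specialize (Hx 0). simpl in Hx. apply Hx. intros y Hy. exfalso; apply H; exists y; auto.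
- transitivity (real p_infty); [f_equal; exact E | reflexivity].
Qed.

Lemma RInt_nonneg (F : R -> R) T t : in0T T t -> (forall x, in0T T x -> 0 <= F x) ->
  0 <= RInt F 0 t.
Proof.
intros Ht HF. destruct (Classical_Prop.classic (ex_RInt F 0 t)) as [He|He].
- apply RInt_ge_0; auto. apply (proj1 Ht). intros x Hx. apply HF. unfold in0T in *; lra.
- rewrite RInt_nex; auto. lra.
Qed.

Lemma div_le a b c d : 0 < b -> 0 < d -> a * d <= c * b -> a / b <= c / d.
Proof.
intros Hb Hd H. unfold Rdiv.
apply (Rmult_le_reg_r (b * d)). nra.
replace (a * / b * (b * d)) with (a * d) by (field; lra).
replace (c * / d * (b * d)) with (c * b) by (field; lra). auto.
Qed.

Lemma gprop (B lam T eta cm C0 phimin phimax : R) (c0 : nat -> R) (f : R -> nat -> R) t m :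
  (B = -1 \/ B = 1) -> 0 < lam -> 0 < cm -> (forall n, cm <= c0 n <= C0) ->
  0 < phimin -> (forall c, 0 <= c <= C0 -> phimin <= phi B c <= phimax) ->
  (forall t n, in0T T t -> 0 <= f t n <= eta) -> in0T T t ->
  0 < gcoef lam B c0 f t m /\
  phimin / (phimin + C0) <= 1 + B * gcoef lam B c0 f t m <= 2 + C0.
Proof.
intros HB Hlam Hcm Hc0 Hpm Hphi Hf Ht. unfold gcoef.
set (X := RInt (fun tau => f tau m) 0 t).
assert (HX : 0 <= X). { apply (RInt_nonneg _ T t Ht). intros x Hx. apply (Hf x m Hx). }
set (e := exp (lam * X)).
assert (He : 1 <= e). { unfold e. rewrite <- exp_0. destruct HX as [HX|<-].
  left. apply exp_increasing. nra. rewrite Rmult_0_r. lra. }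
set (c := c0 m). assert (Hc : cm <= c <= C0) by apply Hc0.
assert (Hph := Hphi c ltac:(lra)). set (ph := phi B c) in *.
assert (Hphd : ph = 1 + B * c) by reflexivity.
assert (Hdelta1 : phimin / (phimin + C0) <= 1).
{ apply (Rmult_le_reg_r (phimin + C0)). lra. unfold Rdiv. rewrite Rmult_assoc, Rinv_l; lra. }
clearbody X e c ph.
destruct HB as [-> | ->].
- assert (Hden : 0 < ph * e - -1 * c) by nra.
  set (den := ph * e - -1 * c) in *.
  assert (Hg : 0 < c / den) by (apply Rdiv_lt_0_compat; lra).
  split; auto. split.
  + replace (1 + -1 * (c / den)) with ((ph * e) / den) by (unfold den; field; unfold den in Hden; lra).
    apply div_le; try lra. unfold den.
    assert (phimin <= ph * e) by nra.
    assert (phimin * c <= phimin * C0) by nra.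
    assert (phimin * C0 <= ph * e * C0) by nra.
    nra.
  + lra.
- assert (Hden : 1 <= ph * e - 1 * c).
  { assert (0 <= (1+c)*(e-1)) by (apply Rmult_le_pos; lra). rewrite Hphd. lra. }
  set (den := ph * e - 1 * c) in *.
  assert (Hg : 0 < c / den) by (apply Rdiv_lt_0_compat; lra).
  assert (Hg2 : c / den <= c).
  { replace c with (c / 1) at 2 by field. apply div_le; nra. }
  split; auto. split; lra.
Qed.

Lemma rhs_ident h b1 gam F (v : nat -> R) (g : nat -> R) n : 0 < h ->
  lap h v (S n) + b1 * (Dp h g (S n) * Dp h v (S n) + Dm h g (S n) * Dm h v (S n))
    + gam * v (S n) * F =
  (1 + b1 * (g (S (S n)) - g (S n))) / (h * h) * (v (S (S n)) - v (S n))
  + (1 - b1 * (g (S n) - g n)) / (h * h) * (v n - v (S n))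
  + gam * F * v (S n).
Proof. intros Hh. unfold lap, Dp, Dm. simpl Nat.pred. field. lra. Qed.

Lemma coef_eq B g0 g1 : 1 + B * g0 <> 0 ->
  1 + B / (2 * (1 + B * g0)) * (g1 - g0) = ((1 + B * g0) + (1 + B * g1)) / (2 * (1 + B * g0)).
Proof. intros. field. auto. Qed.

Lemma coef_eq2 B g0 g1 : 1 + B * g0 <> 0 ->
  1 - B / (2 * (1 + B * g0)) * (g0 - g1) = ((1 + B * g0) + (1 + B * g1)) / (2 * (1 + B * g0)).
Proof. intros. field. auto. Qed.

Lemma coef_bound p q h d G : 0 < h -> 0 < d <= p -> 0 < q <= G ->
  0 <= (p + q) / (2 * p) / (h * h) <= (1/2 + G / (2 * d)) / (h * h).
Proof.
intros Hh Hp Hq. assert (0 < h * h) by nra. split.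
- apply Rdiv_le_0_compat; [|lra]. apply Rdiv_le_0_compat; lra.
- unfold Rdiv. apply Rmult_le_compat_r. left; apply Rinv_0_lt_compat; lra.
  replace ((p + q) * / (2 * p)) with (1/2 + q / (2 * p)) by (field; lra).
  apply Rplus_le_compat_l. apply div_le; nra.
Qed.

Lemma deriv_aff (g : R -> R) x l k b : is_derive g x l -> is_derive (fun t => k * g t + b) x (k*l).
Proof. intros H. apply is_derive_Reals in H. apply is_derive_Reals.
replace (k*l) with (k*l + 0) by ring.
apply (derivable_pt_lim_plus (fun t => k * g t) (fun _ => b)).
apply derivable_pt_lim_scal. auto. apply derivable_pt_lim_const. Qed.

Lemma ineq_aff s a1 a2 c3 x1 x0 xm eta : c3 * eta <= 0 ->
  s * (a1 * (x1 - x0) + a2 * (xm - x0) + c3 * x0) <=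
  a1 * ((s * x1 + - eta) - (s * x0 + - eta)) + a2 * ((s * xm + - eta) - (s * x0 + - eta))
  + c3 * (s * x0 + - eta).
Proof. intros. nra. Qed.

Lemma lap_ident h (v : nat -> R) n : 0 < h ->
  lap h v (S n) = 1 / (h * h) * (v (S (S n)) - v (S n)) + 1 / (h * h) * (v n - v (S n)) + 0 * v (S n).
Proof. intros. unfold lap, Dp, Dm. simpl Nat.pred. field. lra. Qed.

Theorem mainTheorem8
  (h B lam T eta beta cm C0 phimin phimax K : R)
  (psi : R -> R) (s0 c0 : nat -> R) (f s u : R -> nat -> R)
  (* standing assumptions (A = 1) *)
  (Hh : 0 < h)
  (HB : B = -1 \/ B = 1)
  (Hlam : 0 < lam) (HT : 0 < T) (Heta : 0 < eta)
  (Hbeta : 1/4 < beta < 1/2)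
  (Hpsi_hol : holder_0T T beta psi)
  (Hpsi_bd : forall t, in0T T t -> 0 <= psi t <= eta)
  (Hpsi0 : psi 0 = 0)
  (Hs0_bd : forall n, 0 <= s0 n <= eta)
  (Hs00 : s0 0%nat = 0)
  (Hs0_L2 : inL2 s0) (HDs0_L2 : inL2 (Dp h s0))
  (Hcm : 0 < cm)
  (Hc0_bd : forall n, cm <= c0 n <= C0)
  (Hc0_L2 : inL2 (fun n => C0 - c0 n)) (HDc0_L2 : inL2 (Dp h c0))
  (Hphimin : 0 < phimin)
  (Hphi : forall c, 0 <= c <= C0 -> phimin <= phi B c <= phimax)
  (HB1 : B = 1 -> eta < 1)
  (* f satisfies (F) *)
  (HK : 0 < K)
  (HF : condF h T eta K psi f)
  (* s = tilde s, u = heat solution *)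
  (Hs : is_lin_solution h lam B T psi s0 c0 f s)
  (Hu : is_heat_solution h T psi u) :
  forall t n, in0T T t -> (1 <= n)%nat -> Rabs (s t n - u t n) <= 2 * eta.
Proof.
intros t n Ht Hn.
destruct HF as [_ [_ [_ [_ [_ [_ Hfb]]]]]].
destruct Hs as [[Ms HMs] [Hsc [Hsd [Hs0 Hsb]]]].
destruct Hu as [[Mu HMu] [Huc [Hud [Hu0 Hub]]]].
assert (HC0 : 0 < C0) by (pose proof (Hc0_bd 0%nat); lra).
set (dl := phimin / (phimin + C0)).
assert (Hdl : 0 < dl) by (unfold dl; apply Rdiv_lt_0_compat; lra).
set (A := (1/2 + (2 + C0) / (2 * dl)) / (h * h)).
assert (HA : 0 <= A).
{ unfold A. apply Rdiv_le_0_compat; [|nra]. assert (0 <= (2 + C0) / (2 * dl)).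
  apply Rdiv_le_0_compat; lra. lra. }
set (g := fun t => gcoef lam B c0 f t).
set (ap := fun t n => (1 + bcoef B (g t) n * (g t (S n) - g t n)) / (h * h)).
set (am := fun t n => (1 - bcoef B (g t) n * (g t n - g t (Nat.pred n))) / (h * h)).
set (cc := fun t n => gammacoef lam (g t) n * (B * f t n - 1)).
assert (Hgp : forall t m, in0T T t -> 0 < g t m /\ dl <= 1 + B * g t m <= 2 + C0).
{ intros t' m Ht'. apply (gprop B lam T eta cm C0 phimin phimax); auto. }
assert (Hco : forall t n, 0 < t < T -> (1 <= n)%nat ->
   0 <= ap t n <= A /\ 0 <= am t n <= A /\ cc t n <= 0).
{ intros t' n' Ht' Hn'. destruct n' as [|n']; [lia|].
  assert (Ht'' : in0T T t') by (unfold in0T; lra).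
  destruct (Hgp t' (S n') Ht'') as [G1 G1'].
  destruct (Hgp t' (S (S n')) Ht'') as [G2 G2'].
  destruct (Hgp t' n' Ht'') as [G0 G0'].
  split; [|split].
  - unfold ap, bcoef. rewrite coef_eq by lra. unfold A. apply coef_bound; lra.
  - unfold am, bcoef. simpl Nat.pred. rewrite coef_eq2 by lra. unfold A. apply coef_bound; lra.
  - unfold cc, gammacoef. assert (B * f t' (S n') - 1 < 0).
    { destruct (Hfb t' (S n') Ht''). destruct HB as [-> | ->]. lra.
      specialize (HB1 eq_refl). lra. }
    assert (0 < lam * g t' (S n')) by nra. nra. }
assert (Hsbd : forall sg, (sg = 1 \/ sg = -1) -> forall t n, in0T T t -> sg * s t n + - eta <= 0).
{ intros sg Hsg.
  apply (maxp T A ap am cc (fun t n => sg * lin_rhs h lam B c0 f s t n)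
           (fun t n => sg * s t n + - eta)); auto.
  - exists Ms. intros t' n' Ht'. specialize (HMs t' n' Ht').
    destruct Hsg as [-> | ->]; apply Rabs_le_between in HMs; lra.
  - intros n'. apply cont_aff. auto.
  - intros t' n' Ht' Hn'. apply deriv_aff. auto.
  - intros t' n' Ht' Hn'. destruct n' as [|n']; [lia|].
    unfold lin_rhs. cbv zeta. rewrite rhs_ident by auto.
    apply ineq_aff. destruct (Hco t' (S n') Ht' Hn') as [_ [_ Hc]].
    nra.
  - intros n' Hn'. rewrite Hs0 by auto. specialize (Hs0_bd n'). destruct Hsg as [-> | ->]; lra.
  - intros t' Ht'. rewrite Hsb by auto. specialize (Hpsi_bd t' Ht'). destruct Hsg as [-> | ->]; lra. }
assert (Hubd : forall sg, (sg = 1 \/ sg = -1) -> forall t n, in0T T t -> sg * u t n + - eta <= 0).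
{ intros sg Hsg.
  apply (maxp T A (fun _ _ => 1 / (h * h)) (fun _ _ => 1 / (h * h)) (fun _ _ => 0)
           (fun t n => sg * lap h (u t) n)
           (fun t n => sg * u t n + - eta)); auto.
  - intros t' n' Ht' Hn'. destruct (Hco t' n' Ht' Hn') as [_ [_ _]].
    assert (0 <= 1 / (h * h)) by (apply Rdiv_le_0_compat; nra).
    assert (1 / (h*h) <= A).
    { unfold A. unfold Rdiv. apply Rmult_le_compat_r. left; apply Rinv_0_lt_compat; nra.
      assert (Hdl1 : dl <= 1).
      { unfold dl. apply (Rmult_le_reg_r (phimin + C0)). lra. unfold Rdiv. rewrite Rmult_assoc, Rinv_l; lra. }
      assert (Hq : 1 / 1 <= (2 + C0) / (2 * dl)) by (apply div_le; lra).
      unfold Rdiv in Hq. rewrite Rmult_1_l, Rinv_1 in Hq. lra. }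
    lra.
  - exists Mu. intros t' n' Ht'. specialize (HMu t' n' Ht').
    destruct Hsg as [-> | ->]; apply Rabs_le_between in HMu; lra.
  - intros n'. apply cont_aff. auto.
  - intros t' n' Ht' Hn'. apply deriv_aff. auto.
  - intros t' n' Ht' Hn'. destruct n' as [|n']; [lia|].
    rewrite lap_ident by auto. apply ineq_aff. lra.
  - intros n' Hn'. rewrite Hu0 by auto. lra.
  - intros t' Ht'. rewrite Hub by auto. specialize (Hpsi_bd t' Ht'). destruct Hsg as [-> | ->]; lra. }
pose proof (Hsbd 1 (or_introl eq_refl) t n Ht).
pose proof (Hsbd (-1) (or_intror eq_refl) t n Ht).
pose proof (Hubd 1 (or_introl eq_refl) t n Ht).
pose proof (Hubd (-1) (or_intror eq_refl) t n Ht).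
apply Rabs_le. lra.
Qed.
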